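(* Let $n\ge 1$, let $\Omega\subset\mathbb{R}^n$ be a domain, and let $\boldsymbol{\alpha}:\mathbb{R}^n\times\mathbb{R}^n\to\mathbb{R}^n$ be a nonlocal weight function satisfying $\boldsymbol{\alpha}(\mathbf{x},\mathbf{x}')=-\boldsymbol{\alpha}(\mathbf{x}',\mathbf{x})$ for all $\mathbf{x},\mathbf{x}'$. Define the interaction (volume-constrained boundary) region $$\Omega_\tau=\{\mathbf{x}'\in\mathbb{R}^n\setminus\Omega \;:\; \exists\,\mathbf{x}\in\Omega \text{ with } \boldsymbol{\alpha}(\mathbf{x},\mathbf{x}')\neq\mathbf{0}\}.$$ Let $\boldsymbol{\Theta}(\mathbf{x},\mathbf{x}')$ be a fourth-order tensor field on $(\Omega\cup\Omega_\tau)\times(\Omega\cup\Omega_\tau)$ with components satisfying $\Theta_{ijkl}=\Theta_{jikl}=\Theta_{ijlk}=\Theta_{klij}$ and $\boldsymbol{\Theta}(\mathbf{x},\mathbf{x}')=\boldsymbol{\Theta}(\mathbf{x}',\mathbf{x})$. For vector fields $\mathbf{w}$ on $\Omega\cup\Omega_\tau$ and second-order tensor fields $\boldsymbol{\Psi}(\mathbf{x},\mathbf{x}')$ on $(\Omega\cup\Omega_\tau)^2$ define $$\mathcal{D}^*(\mathbf{w})(\mathbf{x},\mathbf{x}')=-[\mathbf{w}(\mathbf{x}')-\mathbf{w}(\mathbf{x})]\otimes\boldsymbol{\alpha}(\mathbf{x},\mathbf{x}'),$$ $$\mathcal{D}(\boldsymbol{\Psi})(\mathbf{x})=\int_{\Omega\cup\Omega_\tau}[\boldsymbol{\Psi}(\mathbf{x},\mathbf{x}')+\boldsymbol{\Psi}(\mathbf{x}',\mathbf{x})]\cdot\boldsymbol{\alpha}(\mathbf{x},\mathbf{x}')\,dV_{\mathbf{x}'}\quad(\mathbf{x}\in\Omega),$$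 $$\mathcal{N}(\boldsymbol{\Psi})(\mathbf{x})=-\int_{\Omega\cup\Omega_\tau}[\boldsymbol{\Psi}(\mathbf{x},\mathbf{x}')+\boldsymbol{\Psi}(\mathbf{x}',\mathbf{x})]\cdot\boldsymbol{\alpha}(\mathbf{x},\mathbf{x}')\,dV_{\mathbf{x}'}\quad(\mathbf{x}\in\Omega_\tau),$$ where $(\boldsymbol{\Theta}:\mathbf{A})_{ij}=\Theta_{ijkl}A_{kl}$ and $(\boldsymbol{\Psi}\cdot\boldsymbol{\alpha})_i=\Psi_{ij}\alpha_j$. Then for any two vector fields $\mathbf{v}_1,\mathbf{v}_2$ on $\Omega\cup\Omega_\tau$ for which all the integrals involved converge absolutely, $$\int_{\Omega}\Big[\mathbf{v}_1(\mathbf{x})\cdot\mathcal{D}\big(\boldsymbol{\Theta}:\mathcal{D}^*(\mathbf{v}_2)\big)(\mathbf{x})-\mathbf{v}_2(\mathbf{x})\cdot\mathcal{D}\big(\boldsymbol{\Theta}:\mathcal{D}^*(\mathbf{v}_1)\big)(\mathbf{x})\Big]dV_{\mathbf{x}}$$ $$=\int_{\Omega_\tau}\Big[\mathbf{v}_1(\mathbf{x})\cdot\mathcal{N}\big(\boldsymbol{\Theta}:\mathcal{D}^*(\mathbf{v}_2)\big)(\mathbf{x})-\mathbf{v}_2(\mathbf{x})\cdot\mathcal{N}\big(\boldsymbol{\Theta}:\mathcal{D}^*(\mathbf{v}_1)\big)(\mathbf{x})\Big]dV_{\mathbf{x}}.$$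
   Context: This is the nonlocal (peridynamic) reciprocal theorem for linear elasticity, formulated with the nonlocal divergence operator $\mathcal{D}$, its adjoint-type operator $\mathcal{D}^*$, and the nonlocal interaction (traction) operator $\mathcal{N}$. Since $\boldsymbol{\alpha}(\mathbf{x},\mathbf{x}')\ne\mathbf{0}$ with $\mathbf{x}\in\Omega$ forces $\mathbf{x}'\in\Omega\cup\Omega_\tau$, integrating over $\Omega\cup\Omega_\tau$ in $\mathcal{D}$ is the same as integrating over $\mathbb{R}^n$. Note $\Omega\cap\Omega_\tau=\emptyset$. *)

(* Defs.v *)
From HB Require Import structures.
From mathcomp Require Import all_boot all_order all_algebra.
From mathcomp Require Import all_classical all_reals all_analysis.
Set Implicit Arguments. Unset Strict Implicit. Unset Printing Implicit Defensive.
Import Order.TTheory GRing.Theory Num.Theory.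
Import numFieldNormedType.Exports.
Local Open Scope classical_set_scope.
Local Open Scope ring_scope.

(* Points of R^n are represented as n.-tuple R; this type carries the
   product (Borel) sigma-algebra generated by the coordinate projections. *)

Definition lebesgue_box_volume (R : realType) (n : nat)
  (mu : set (n.-tuple R) -> \bar R) : Prop :=
  forall a b : n.-tuple R,
    mu [set x | forall i : 'I_n, tnth a i <= tnth x i < tnth b i]
    = (\prod_(i < n) Num.max 0 (tnth b i - tnth a i))%:E.

(* coordinates map into the normed space 'rV[R]_n (for topology) *)
Definition rV_of_tuple (R : realType) (n : nat) (x : n.-tuple R) : 'rV[R]_n :=
  \row_(i < n) tnth x i.

Definition is_domain (R : realType) (n : nat) (Omega : set (n.-tuple R)) : Prop :=
  Omega !=set0 /\ open (@rV_of_tuple R n @` Omega)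
  /\ connected (@rV_of_tuple R n @` Omega).

(* vectors in R^n are functions 'I_n -> R; second/fourth order tensors are
   functions of 2/4 indices. *)
Definition nonzero_vec (R : realType) (n : nat) (a : 'I_n -> R) : Prop :=
  exists j, a j != 0.

Definition Omega_tau (R : realType) (n : nat)
  (alpha : n.-tuple R -> n.-tuple R -> 'I_n -> R) (Omega : set (n.-tuple R))
  : set (n.-tuple R) :=
  [set x' | ~ Omega x' /\ exists2 x, Omega x & nonzero_vec (alpha x x')].

Definition Dstar (R : realType) (n : nat)
  (alpha : n.-tuple R -> n.-tuple R -> 'I_n -> R)
  (w : n.-tuple R -> 'I_n -> R) : n.-tuple R -> n.-tuple R -> 'I_n -> 'I_n -> R :=
  fun x x' i j => - ((w x' i - w x i) * alpha x x' j).

Definition ddot (R : realType) (n : nat)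
  (Theta : n.-tuple R -> n.-tuple R -> 'I_n -> 'I_n -> 'I_n -> 'I_n -> R)
  (A : n.-tuple R -> n.-tuple R -> 'I_n -> 'I_n -> R)
  : n.-tuple R -> n.-tuple R -> 'I_n -> 'I_n -> R :=
  fun x x' i j => \sum_(k < n) \sum_(l < n) Theta x x' i j k l * A x x' k l.

Definition Dintegrand (R : realType) (n : nat)
  (alpha : n.-tuple R -> n.-tuple R -> 'I_n -> R)
  (Psi : n.-tuple R -> n.-tuple R -> 'I_n -> 'I_n -> R)
  (x : n.-tuple R) (i : 'I_n) : n.-tuple R -> R :=
  fun x' => \sum_(j < n) (Psi x x' i j + Psi x' x i j) * alpha x x' j.

Definition Dop (R : realType) (n : nat) (mu : {measure set (n.-tuple R) -> \bar R})
  (U : set (n.-tuple R))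
  (alpha : n.-tuple R -> n.-tuple R -> 'I_n -> R)
  (Psi : n.-tuple R -> n.-tuple R -> 'I_n -> 'I_n -> R)
  : n.-tuple R -> 'I_n -> R :=
  fun x i => Rintegral mu U (Dintegrand alpha Psi x i).

Definition Nop (R : realType) (n : nat) (mu : {measure set (n.-tuple R) -> \bar R})
  (U : set (n.-tuple R))
  (alpha : n.-tuple R -> n.-tuple R -> 'I_n -> R)
  (Psi : n.-tuple R -> n.-tuple R -> 'I_n -> 'I_n -> R)
  : n.-tuple R -> 'I_n -> R :=
  fun x i => - Rintegral mu U (Dintegrand alpha Psi x i).

Definition vdot (R : realType) (n : nat) (a b : 'I_n -> R) : R :=
  \sum_(i < n) a i * b i.

(* Main.v *)
Require Import Defs.
From HB Require Import structures.
From mathcomp Require Import all_boot all_order all_algebra.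
From mathcomp Require Import all_classical all_reals all_analysis.
From mathcomp Require Import ring lra.
Import Order.TTheory GRing.Theory Num.Theory.
Import numFieldNormedType.Exports.
Local Open Scope classical_set_scope.
Local Open Scope ring_scope.
Set Implicit Arguments. Unset Strict Implicit.

Definition Sform (R : realType) (n : nat)
  (alpha : n.-tuple R -> n.-tuple R -> 'I_n -> R)
  (Theta : n.-tuple R -> n.-tuple R -> 'I_n -> 'I_n -> 'I_n -> 'I_n -> R)
  (x y : n.-tuple R) (p q : 'I_n -> R) : R :=
  \sum_(i < n) \sum_(j < n) \sum_(k < n) \sum_(l < n)
    Theta x y i j k l * (p i * q k * (alpha x y j * alpha x y l)).

Lemma F_expand (R : realType) (n : nat)
  (alpha : n.-tuple R -> n.-tuple R -> 'I_n -> R)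
  (Theta : n.-tuple R -> n.-tuple R -> 'I_n -> 'I_n -> 'I_n -> 'I_n -> R)
  (u w : n.-tuple R -> 'I_n -> R) (x y : n.-tuple R) :
  (forall i j k l, Theta y x i j k l = Theta x y i j k l) ->
  (forall j, alpha y x j = - alpha x y j) ->
  vdot (u x) (fun i => Dintegrand alpha (ddot Theta (Dstar alpha w)) x i y)
  = -2 * (Sform alpha Theta x y (u x) (w y) - Sform alpha Theta x y (u x) (w x)).
Proof.
move=> hT hA.
rewrite /vdot /Sform -sumrB mulr_sumr; apply: eq_bigr => i _.
rewrite /Dintegrand -sumrB mulr_sumr mulr_sumr; apply: eq_bigr => j _.
rewrite /ddot /Dstar.
have -> : \sum_(k < n) \sum_(l < n) Theta y x i j k l * - ((w x k - w y k) * alpha y x l)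
   = \sum_(k < n) \sum_(l < n) Theta x y i j k l * - ((w y k - w x k) * alpha x y l).
  apply: eq_bigr => k _; apply: eq_bigr => l _; rewrite hT hA; ring.
set P := \sum_(k < n) _.
rewrite (_ : u x i * ((P + P) * alpha x y j) = (2 * u x i * alpha x y j) * P); last by ring.
rewrite /P -sumrB !mulr_sumr; apply: eq_bigr => k _.
rewrite -sumrB !mulr_sumr; apply: eq_bigr => l _.
ring.
Qed.

Lemma S_swap (R : realType) (n : nat)
  (alpha : n.-tuple R -> n.-tuple R -> 'I_n -> R)
  (Theta : n.-tuple R -> n.-tuple R -> 'I_n -> 'I_n -> 'I_n -> 'I_n -> R)
  (x y : n.-tuple R) p q :
  (forall i j k l, Theta y x i j k l = Theta x y i j k l) ->
  (forall j, alpha y x j = - alpha x y j) ->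
  Sform alpha Theta y x p q = Sform alpha Theta x y p q.
Proof.
move=> hT hA; apply: eq_bigr => i _; apply: eq_bigr => j _.
apply: eq_bigr => k _; apply: eq_bigr => l _; rewrite hT !hA; ring.
Qed.

Lemma S_sym (R : realType) (n : nat)
  (alpha : n.-tuple R -> n.-tuple R -> 'I_n -> R)
  (Theta : n.-tuple R -> n.-tuple R -> 'I_n -> 'I_n -> 'I_n -> 'I_n -> R)
  (x y : n.-tuple R) p q :
  (forall i j k l, Theta x y i j k l = Theta x y k l i j) ->
  Sform alpha Theta x y p q = Sform alpha Theta x y q p.
Proof.
move=> hT; rewrite /Sform.
transitivity (\sum_(i < n) \sum_(k < n) \sum_(j < n) \sum_(l < n)
    Theta x y i j k l * (p i * q k * (alpha x y j * alpha x y l))).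
  by apply: eq_bigr => i _; rewrite exchange_big.
rewrite exchange_big /=; apply: eq_bigr => k _.
transitivity (\sum_(i < n) \sum_(l < n) \sum_(j < n)
    Theta x y i j k l * (p i * q k * (alpha x y j * alpha x y l))).
  by apply: eq_bigr => i _; rewrite exchange_big.
rewrite exchange_big /=; apply: eq_bigr => l _.
apply: eq_bigr => i _; apply: eq_bigr => j _.
rewrite hT; ring.
Qed.

Definition Gf (R : realType) (n : nat)
  (alpha : n.-tuple R -> n.-tuple R -> 'I_n -> R)
  (Theta : n.-tuple R -> n.-tuple R -> 'I_n -> 'I_n -> 'I_n -> 'I_n -> R)
  (v1 v2 : n.-tuple R -> 'I_n -> R) (x y : n.-tuple R) : R :=
  vdot (v1 x) (fun i => Dintegrand alpha (ddot Theta (Dstar alpha v2)) x i y)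
  - vdot (v2 x) (fun i => Dintegrand alpha (ddot Theta (Dstar alpha v1)) x i y).

Lemma G_anti (R : realType) (n : nat)
  (alpha : n.-tuple R -> n.-tuple R -> 'I_n -> R)
  (Theta : n.-tuple R -> n.-tuple R -> 'I_n -> 'I_n -> 'I_n -> 'I_n -> R)
  (v1 v2 : n.-tuple R -> 'I_n -> R) (x y : n.-tuple R) :
  (forall i j k l, Theta y x i j k l = Theta x y i j k l) ->
  (forall i j k l, Theta x y i j k l = Theta x y k l i j) ->
  (forall a b j, alpha a b j = - alpha b a j) ->
  Gf alpha Theta v1 v2 y x = - Gf alpha Theta v1 v2 x y.
Proof.
move=> hT hS hA.
have hT' : forall i j k l, Theta x y i j k l = Theta y x i j k l by move=> *; rewrite hT.
rewrite /Gf !F_expand //.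
rewrite !(S_swap _ _ hT (hA y x)).
rewrite (S_sym alpha (v1 x) (v2 x) hS) (S_sym alpha (v1 y) (v2 y) hS).
rewrite (S_sym alpha (v1 y) (v2 x) hS) (S_sym alpha (v2 y) (v1 x) hS).
ring.
Qed.

Lemma int_sumE d (T : measurableType d) (R : realType)
  (mu : {measure set T -> \bar R}) (D : set T) (mD : measurable D)
  (I : Type) (s : seq I) (f : I -> T -> R) :
  (forall i, mu.-integrable D (EFin \o f i)) ->
  mu.-integrable D (EFin \o (fun x => \sum_(i <- s) f i x)).
Proof.
move=> h.
have -> : (EFin \o (fun x => \sum_(i <- s) f i x)) =
          (fun x => (\sum_(i <- s) (EFin \o f i) x)%E).
  by apply/funext => x /=; rewrite sumEFin.
exact: integrable_sum.
Qed.

Lemma Rint_sum d (T : measurableType d) (R : realType)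
  (mu : {measure set T -> \bar R}) (D : set T) (mD : measurable D)
  (I : Type) (s : seq I) (f : I -> T -> R) :
  (forall i, mu.-integrable D (EFin \o f i)) ->
  Rintegral mu D (fun x => \sum_(i <- s) f i x) = \sum_(i <- s) Rintegral mu D (f i).
Proof.
move=> h; elim: s => [|i s IH].
  rewrite big_nil; under eq_Rintegral do rewrite big_nil.
  by rewrite /Rintegral integral0.
rewrite big_cons; under eq_Rintegral do rewrite big_cons.
rewrite RintegralD //; first by rewrite IH.
exact: int_sumE.
Qed.
Unset Implicit Arguments. Set Strict Implicit.

Theorem mainTheorem1 (R : realType) (n : nat)
  (mu : {sigma_finite_measure set (n.-tuple R) -> \bar R})
  (Omega : set (n.-tuple R))
  (alpha : n.-tuple R -> n.-tuple R -> 'I_n -> R)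
  (Theta : n.-tuple R -> n.-tuple R -> 'I_n -> 'I_n -> 'I_n -> 'I_n -> R)
  (v1 v2 : n.-tuple R -> 'I_n -> R) :
  (0 < n)%N ->
  lebesgue_box_volume mu ->
  is_domain Omega ->
  (forall x x' j, alpha x x' j = - alpha x' x j) ->
  (* symmetries of Theta on (Omega u Omega_tau)^2 *)
  (forall x x', (Omega `|` Omega_tau alpha Omega) x ->
     (Omega `|` Omega_tau alpha Omega) x' -> forall i j k l,
     [/\ Theta x x' i j k l = Theta x x' j i k l,
         Theta x x' i j k l = Theta x x' i j l k,
         Theta x x' i j k l = Theta x x' k l i j &
         Theta x x' i j k l = Theta x' x i j k l]) ->
  (* the integrals involved make sense and converge absolutely: *)
  measurable Omega ->
  measurable (Omega_tau alpha Omega) ->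
  (let U := Omega `|` Omega_tau alpha Omega in
   let Psi w := ddot Theta (Dstar alpha w) in
   (* inner integrals defining D and N *)
   (forall w, w = v1 \/ w = v2 -> forall x, U x -> forall i,
      mu.-integrable U (fun x' => (Dintegrand alpha (Psi w) x i x')%:E)) /\
   (* the double integrals, as integrals over U x U *)
   (forall w u, w = v1 \/ w = v2 -> u = v1 \/ u = v2 -> forall i,
      (mu \x mu)%E.-integrable (U `*` U)
        (fun p => (u p.1 i * Dintegrand alpha (Psi w) p.1 i p.2)%:E)) /\
   (* the outer integrals *)
   mu.-integrable Omega (fun x =>
      (vdot (v1 x) (Dop mu U alpha (Psi v2) x)
       - vdot (v2 x) (Dop mu U alpha (Psi v1) x))%:E) /\
   mu.-integrable (Omega_tau alpha Omega) (fun x =>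
      (vdot (v1 x) (Nop mu U alpha (Psi v2) x)
       - vdot (v2 x) (Nop mu U alpha (Psi v1) x))%:E)) ->
  let U := Omega `|` Omega_tau alpha Omega in
  let Psi w := ddot Theta (Dstar alpha w) in
  Rintegral mu Omega (fun x =>
      vdot (v1 x) (Dop mu U alpha (Psi v2) x)
    - vdot (v2 x) (Dop mu U alpha (Psi v1) x))
  = Rintegral mu (Omega_tau alpha Omega) (fun x =>
      vdot (v1 x) (Nop mu U alpha (Psi v2) x)
    - vdot (v2 x) (Nop mu U alpha (Psi v1) x)).
Proof.
move=> n0 leb dom hA hT mO mOt H U Psi.
move: H => /= [h1 [h2 _]].
have mU : measurable U by exact: measurableU.
have hTU : forall x y, U x -> U y ->
   (forall i j k l, Theta y x i j k l = Theta x y i j k l) /\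
   (forall i j k l, Theta x y i j k l = Theta x y k l i j).
  move=> x y xU yU; split => i j k l.
    by have [_ _ _ ->] := hT y x yU xU i j k l.
  by have [_ _ -> _] := hT x y xU yU i j k l.
pose G := Gf alpha Theta v1 v2.
pose Rint x := Rintegral mu U (G x).
have GE : forall x, G x = fun y =>
   \sum_(i < n) (v1 x i * Dintegrand alpha (Psi v2) x i y)
 - \sum_(i < n) (v2 x i * Dintegrand alpha (Psi v1) x i y) by [].
have iD : forall w, w = v1 \/ w = v2 -> forall x, U x -> forall i,
   mu.-integrable U (EFin \o Dintegrand alpha (Psi w) x i).
  by move=> w hw x xU i; exact: (h1 w hw x xU i).
have iDZ : forall w u, w = v1 \/ w = v2 -> forall x, U x -> forall i,
   mu.-integrable U (EFin \o (fun y => u x i * Dintegrand alpha (Psi w) x i y)).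
  move=> w u hw x xU i.
  have -> : EFin \o (fun y => u x i * Dintegrand alpha (Psi w) x i y)
     = (fun y => (u x i)%:E * (EFin \o Dintegrand alpha (Psi w) x i) y)%E by [].
  exact: integrableZl (iD w hw x xU i).
have iG : forall x, U x -> mu.-integrable U (EFin \o G x).
  move=> x xU; rewrite GE.
  have -> : forall f g : n.-tuple R -> R, EFin \o (fun y => f y - g y)
     = ((EFin \o f) \- (EFin \o g))%E by [].
  apply: integrableB => //; apply: int_sumE => // i.
    first [exact: (iDZ v1 v2 (or_introl erefl) x xU i) | first [exact: (iDZ v1 v2 (or_introl erefl) x xU i) | exact: (iDZ v2 v1 (or_intror erefl) x xU i)]].
  first [exact: (iDZ v1 v2 (or_introl erefl) x xU i) | exact: (iDZ v2 v1 (or_intror erefl) x xU i)].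
have stepA : forall x, U x ->
   vdot (v1 x) (Dop mu U alpha (Psi v2) x) - vdot (v2 x) (Dop mu U alpha (Psi v1) x)
   = Rint x.
  move=> x xU; rewrite /Rint GE RintegralB //; last 2 first.
  - by apply: int_sumE => // i; first [exact: (iDZ v1 v2 (or_introl erefl) x xU i) | first [exact: (iDZ v1 v2 (or_introl erefl) x xU i) | exact: (iDZ v2 v1 (or_intror erefl) x xU i)]].
  - by apply: int_sumE => // i; first [exact: (iDZ v1 v2 (or_introl erefl) x xU i) | exact: (iDZ v2 v1 (or_intror erefl) x xU i)].
  rewrite !Rint_sum //; last 2 first.
  - by move=> i; first [exact: (iDZ v1 v2 (or_introl erefl) x xU i) | exact: (iDZ v2 v1 (or_intror erefl) x xU i)].
  - by move=> i; first [exact: (iDZ v1 v2 (or_introl erefl) x xU i) | first [exact: (iDZ v1 v2 (or_introl erefl) x xU i) | exact: (iDZ v2 v1 (or_intror erefl) x xU i)]].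
  rewrite /vdot /Dop; congr (_ - _); apply: eq_bigr => i _; rewrite RintegralZl //.
  - first [first [exact: (iD v1 (or_introl erefl) x xU i) | exact: (iD v2 (or_intror erefl) x xU i)] | exact: (iD v2 (or_intror erefl) x xU i)].
  - first [exact: (iD v1 (or_introl erefl) x xU i) | exact: (iD v2 (or_intror erefl) x xU i)].
have mUU : measurable (U `*` U) by exact: measurableX.
pose Gp := fun p : n.-tuple R * n.-tuple R => G p.1 p.2.
have iGp : (mu \x mu)%E.-integrable (U `*` U) (EFin \o Gp).
  have -> : EFin \o Gp = ((fun p => \sum_(i < n) ((v1 p.1 i * Dintegrand alpha (Psi v2) p.1 i p.2)%:E))
      \- (fun p => \sum_(i < n) ((v2 p.1 i * Dintegrand alpha (Psi v1) p.1 i p.2)%:E)))%E.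
    by apply/funext => p; rewrite /= /Gp GE !sumEFin.
  apply: (integrableB mUU); apply: (integrable_sum mUU) => i _.
    exact: (h2 v2 v1 (or_intror erefl) (or_introl erefl) i).
  exact: (h2 v1 v2 (or_introl erefl) (or_intror erefl) i).
pose fp := (EFin \o Gp) \_ (U `*` U).
have ifp : (mu \x mu)%E.-integrable setT fp by exact/(integrable_mkcond _ mUU).1.
have RintE : forall x, U x -> (Rint x)%:E = (\int[mu]_(y in U) (G x y)%:E)%E.
  move=> x xU; rewrite /Rint /Rintegral fineK //.
  exact: (integrable_fin_num mU (iG x xU)).
have inner1 : forall x, (\int[mu]_y fp (x, y))%E = ((EFin \o Rint) \_ U) x.
  move=> x; rewrite patchE; case: ifPn => xU.
    rewrite /= RintE; last exact: set_mem.
    rewrite [RHS]integral_mkcond; apply: eq_integral => y _.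
    by rewrite /fp !patchE in_setX /= xU.
  rewrite -[RHS](integral0 mu setT); apply: eq_integral => y _.
  by rewrite /fp patchE in_setX /= (negbTE xU).
have inner2 : forall y, (\int[mu]_x fp (x, y))%E = ((fun y => (- Rint y)%:E) \_ U) y.
  move=> y; rewrite patchE; case: ifPn => yU.
    have yU' : U y by exact: set_mem.
    rewrite EFinN -mulN1e (RintE _ yU') -(integralZl mU (iG y yU')).
    rewrite integral_mkcond; apply: eq_integral => x _.
    rewrite /fp !patchE in_setX /= yU andbT.
    case: ifPn => // xU; have xU' : U x by exact: set_mem.
    have [hT1 hS1] := hTU y x yU' xU'.
    rewrite /Gp /G /= (G_anti v1 v2 hT1 hS1 hA) /= EFinN.
    by rewrite mulN1e.
  rewrite -[RHS](integral0 mu setT); apply: eq_integral => x _.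
  by rewrite /fp patchE in_setX /= (negbTE yU) andbF.
have FB := Fubini ifp.
have iR : mu.-integrable U (EFin \o Rint).
  apply/(integrable_mkcond _ mU).
  have -> : (EFin \o Rint) \_ U = fubini_F mu fp.
    by apply/funext => x; rewrite /fubini_F inner1.
  exact: integrable_fubini_F ifp.
have I0 : Rintegral mu U Rint = 0.
  have E1 : (\int[mu]_x \int[mu]_y fp (x, y) = \int[mu]_(x in U) (Rint x)%:E)%E.
    rewrite [RHS]integral_mkcond; apply: eq_integral => x _; exact: inner1.
  have E2 : (\int[mu]_y \int[mu]_x fp (x, y) = - \int[mu]_(x in U) (Rint x)%:E)%E.
    rewrite -mulN1e -(integralZl mU iR) integral_mkcond; apply: eq_integral => y _.
    rewrite inner2 !patchE; case: ifPn => //= _; by rewrite EFinN mulN1e.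
  rewrite E1 E2 in FB.
  have fin := integrable_fin_num mU iR.
  rewrite /Rintegral; move: FB fin.
  case: (\int[mu]_(x in U) (Rint x)%:E)%E => //= r.
  by move=> [h] _; lra.
have disj : [disjoint Omega & Omega_tau alpha Omega].
  by apply/disj_setPS => x [xO [xn _]]; exact: xn xO.
have sU := Rintegral_setU mO mOt iR disj.
have vN : forall a (b : 'I_n -> R), vdot a (fun i => - b i) = - vdot a b.
  by move=> a b; rewrite /vdot -sumrN; apply: eq_bigr => i _; rewrite mulrN.
transitivity (Rintegral mu Omega Rint).
  by apply: eq_Rintegral => x /set_mem xO; apply: stepA; left.
transitivity (Rintegral mu (Omega_tau alpha Omega) (fun x => -1 * Rint x)); last first.
  apply: eq_Rintegral => x /set_mem xt; rewrite -(stepA x); last by right.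
  have e : forall w, Nop mu U alpha (Psi w) x = (fun i => - Dop mu U alpha (Psi w) x i) by [].
  rewrite !e !vN; lra.
rewrite RintegralZl //; last first.
  by apply: (integrableS mU mOt) => // x xt; right.
have : Rintegral mu U Rint = 0 by exact: I0.
rewrite sU; lra.
Qed.
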